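(* Let $s\colon A\to X$ and $t\colon A\to Y$ be isometries in a pre-Hilbert $*$-category, and let $s^\perp\colon X\ominus A\to X$ and $t^\perp\colon Y\ominus A\to Y$ be isometric orthogonal complements of $s$ and $t$. Then the square \[ \begin{bmatrix} s^{\perp *}\\ s^*\\ 0\end{bmatrix} s = \begin{bmatrix} 0\\ t^*\\ t^{\perp *}\end{bmatrix} t \] with legs $\begin{bmatrix} s^{\perp *}\\ s^*\\ 0\end{bmatrix}\colon X\to (X\ominus A)\oplus A\oplus (Y\ominus A)$ and $\begin{bmatrix} 0\\ t^*\\ t^{\perp *}\end{bmatrix}\colon Y\to (X\ominus A)\oplus A\oplus (Y\ominus A)$ is a pushout square, and the cospan formed by these two morphisms is a codilator of $ts^*\colon X\to Y$.
   Context: A $*$-category is a category with a choice of $f^*\colon Y\to X$ for each $f\colon X\to Y$ such that $1^*=1$, $(gf)^*=f^*g^*$, $(f^* )^*=f$; $f$ is an isometry if $f^*f=1$. A pre-Hilbert $*$-category is a $*$-category with (R1) a zero object, (R2) orthonormal biproducts of all pairs (and hence all finite families) of objects, i.e. biproducts with projections equal to the adjoints of the injections (column matrices denote maps into such biproducts), (R3) an isometric kernel for every morphism, and (R4) every diagonal $\Delta\colon X\to X\oplus X$ a kernel of some morphism. An isometric orthogonal complement of a monomorphism $s\colon A\to X$ is an isometric kernel $s^\perp\colon X\ominus A\to X$ of $s^*$. A codilation of $f\colon X\to Y$ is a cospan $(T,t_1,t_2)$ with $t_1\colon X\to T$, $t_2\colon Y\to T$ isometries and $t_2^*t_1=f$.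 A codilator of $f$ is a codilation $(S,s_1,s_2)$ such that for every codilation $(T,t_1,t_2)$ of $f$ there is a unique isometry $t\colon S\to T$ with $ts_1=t_1$ and $ts_2=t_2$. *)

(* Defs.v *)
Set Implicit Arguments.
Unset Strict Implicit.

Record StarCat := {
  ob : Type;
  hom : ob -> ob -> Type;
  comp : forall X Y Z : ob, hom Y Z -> hom X Y -> hom X Z;
  idm : forall X : ob, hom X X;
  star : forall X Y : ob, hom X Y -> hom Y X;
  comp_assoc : forall (W X Y Z : ob) (h : hom Y Z) (g : hom X Y) (f : hom W X),
      comp h (comp g f) = comp (comp h g) f;
  comp_id_l : forall (X Y : ob) (f : hom X Y), comp (idm Y) f = f;
  comp_id_r : forall (X Y : ob) (f : hom X Y), comp f (idm X) = f;
  star_id : forall X : ob, star (idm X) = idm X;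
  star_comp : forall (X Y Z : ob) (g : hom Y Z) (f : hom X Y),
      star (comp g f) = comp (star f) (star g);
  star_star : forall (X Y : ob) (f : hom X Y), star (star f) = f
}.

Arguments comp {C X Y Z} g f : rename.
Arguments idm {C} X : rename.
Arguments star {C X Y} f : rename.

Section Defs.
Variable C : StarCat.
Local Notation "g ∘ f" := (comp g f) (at level 40, left associativity).
Local Notation "f ^*" := (star f) (at level 2).

Definition isometry (X Y : ob C) (f : hom X Y) : Prop := f^* ∘ f = idm X.

Definition is_zero_object (Z : ob C) : Prop :=
  (forall X : ob C, exists f : hom Z X, forall g : hom Z X, g = f) /\
  (forall X : ob C, exists f : hom X Z, forall g : hom X Z, g = f).

Definition is_zero_mor (X Y : ob C) (f : hom X Y) : Prop :=
  exists (Z : ob C) (g : hom X Z) (h : hom Z Y), is_zero_object Z /\ f = h ∘ g.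

Definition is_orth_biproduct2 (X1 X2 P : ob C) (i1 : hom X1 P) (i2 : hom X2 P) : Prop :=
  i1^* ∘ i1 = idm X1 /\ i2^* ∘ i2 = idm X2 /\
  is_zero_mor (i2^* ∘ i1) /\ is_zero_mor (i1^* ∘ i2) /\
  (forall (Q : ob C) (f1 : hom Q X1) (f2 : hom Q X2),
      exists m : hom Q P, i1^* ∘ m = f1 /\ i2^* ∘ m = f2 /\
        forall m' : hom Q P, i1^* ∘ m' = f1 -> i2^* ∘ m' = f2 -> m' = m) /\
  (forall (Q : ob C) (f1 : hom X1 Q) (f2 : hom X2 Q),
      exists m : hom P Q, m ∘ i1 = f1 /\ m ∘ i2 = f2 /\
        forall m' : hom P Q, m' ∘ i1 = f1 -> m' ∘ i2 = f2 -> m' = m).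

Definition is_orth_biproduct3 (X1 X2 X3 P : ob C)
    (i1 : hom X1 P) (i2 : hom X2 P) (i3 : hom X3 P) : Prop :=
  i1^* ∘ i1 = idm X1 /\ i2^* ∘ i2 = idm X2 /\ i3^* ∘ i3 = idm X3 /\
  is_zero_mor (i2^* ∘ i1) /\ is_zero_mor (i3^* ∘ i1) /\
  is_zero_mor (i1^* ∘ i2) /\ is_zero_mor (i3^* ∘ i2) /\
  is_zero_mor (i1^* ∘ i3) /\ is_zero_mor (i2^* ∘ i3) /\
  (forall (Q : ob C) (f1 : hom Q X1) (f2 : hom Q X2) (f3 : hom Q X3),
      exists m : hom Q P, i1^* ∘ m = f1 /\ i2^* ∘ m = f2 /\ i3^* ∘ m = f3 /\
        forall m' : hom Q P, i1^* ∘ m' = f1 -> i2^* ∘ m' = f2 -> i3^* ∘ m' = f3 ->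
          m' = m) /\
  (forall (Q : ob C) (f1 : hom X1 Q) (f2 : hom X2 Q) (f3 : hom X3 Q),
      exists m : hom P Q, m ∘ i1 = f1 /\ m ∘ i2 = f2 /\ m ∘ i3 = f3 /\
        forall m' : hom P Q, m' ∘ i1 = f1 -> m' ∘ i2 = f2 -> m' ∘ i3 = f3 -> m' = m).

Definition is_kernel (K X Y : ob C) (k : hom K X) (f : hom X Y) : Prop :=
  is_zero_mor (f ∘ k) /\
  forall (W : ob C) (g : hom W X), is_zero_mor (f ∘ g) ->
    exists h : hom W K, k ∘ h = g /\ forall h' : hom W K, k ∘ h' = g -> h' = h.

Definition is_isometric_kernel (K X Y : ob C) (k : hom K X) (f : hom X Y) : Prop :=
  isometry k /\ is_kernel k f.

Definition is_isometric_orth_complement (A X XA : ob C) (s : hom A X) (sp : hom XA X)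
  : Prop := is_isometric_kernel sp (s^*).

Definition pre_Hilbert : Prop :=
  (exists Z : ob C, is_zero_object Z) /\
  (forall X1 X2 : ob C, exists (P : ob C) (i1 : hom X1 P) (i2 : hom X2 P),
      is_orth_biproduct2 i1 i2) /\
  (forall (X Y : ob C) (f : hom X Y), exists (K : ob C) (k : hom K X),
      is_isometric_kernel k f) /\
  (forall (X P : ob C) (i1 i2 : hom X P) (d : hom X P),
      is_orth_biproduct2 i1 i2 -> i1^* ∘ d = idm X -> i2^* ∘ d = idm X ->
      exists (Y : ob C) (f : hom P Y), is_kernel d f).

Definition is_pushout (A X Y P : ob C) (s : hom A X) (t : hom A Y)
    (l1 : hom X P) (l2 : hom Y P) : Prop :=
  l1 ∘ s = l2 ∘ t /\
  forall (Q : ob C) (u : hom X Q) (v : hom Y Q), u ∘ s = v ∘ t ->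
    exists w : hom P Q, w ∘ l1 = u /\ w ∘ l2 = v /\
      forall w' : hom P Q, w' ∘ l1 = u -> w' ∘ l2 = v -> w' = w.

Definition is_codilation (X Y T : ob C) (f : hom X Y) (t1 : hom X T) (t2 : hom Y T)
  : Prop := isometry t1 /\ isometry t2 /\ t2^* ∘ t1 = f.

Definition is_codilator (X Y S : ob C) (f : hom X Y) (s1 : hom X S) (s2 : hom Y S)
  : Prop :=
  is_codilation f s1 s2 /\
  forall (T : ob C) (t1 : hom X T) (t2 : hom Y T), is_codilation f t1 t2 ->
    exists t : hom S T, isometry t /\ t ∘ s1 = t1 /\ t ∘ s2 = t2 /\
      forall t' : hom S T, isometry t' -> t' ∘ s1 = t1 -> t' ∘ s2 = t2 -> t' = t.

End Defs.

Notation "g ∘ f" := (comp g f) (at level 40, left associativity).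
Notation "f ^*" := (star f) (at level 2).

(* Main.v *)
Require Import Defs.
Set Implicit Arguments.
Unset Strict Implicit.

Lemma zcl (C : StarCat) (X Y Z : ob C) (f : hom X Y) (g : hom Y Z) :
  is_zero_mor f -> is_zero_mor (g ∘ f).
Proof. intros [Z0 [a [b [HZ ->]]]]. exists Z0, a, (g ∘ b). split; auto. apply comp_assoc. Qed.

Lemma zcr (C : StarCat) (X Y Z : ob C) (f : hom X Y) (g : hom Y Z) :
  is_zero_mor g -> is_zero_mor (g ∘ f).
Proof. intros [Z0 [a [b [HZ ->]]]]. exists Z0, (a ∘ f), b. split; auto.
  symmetry; apply comp_assoc. Qed.

Lemma zst (C : StarCat) (X Y : ob C) (f : hom X Y) :
  is_zero_mor f -> is_zero_mor f^*.
Proof. intros [Z0 [a [b [HZ ->]]]]. exists Z0, b^*, a^*. split; auto.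
  apply star_comp. Qed.

Lemma zuniq (C : StarCat) (X Y : ob C) (f g : hom X Y) :
  is_zero_mor f -> is_zero_mor g -> f = g.
Proof.
  intros [Z1 [a [b [[HI1 HT1] ->]]]] [Z2 [a' [b' [[HI2 HT2] ->]]]].
  destruct (HT2 Z1) as [phi Hphi].
  destruct (HT2 X) as [u Hu]. destruct (HI1 Y) as [v Hv].
  assert (E1 : a' = phi ∘ a) by (rewrite (Hu a'), (Hu (phi ∘ a)); reflexivity).
  assert (E2 : b = b' ∘ phi) by (rewrite (Hv b), (Hv (b' ∘ phi)); reflexivity).
  rewrite E1, E2. symmetry; apply comp_assoc.
Qed.

Lemma bp2_mono (C : StarCat) (X1 X2 P Q : ob C) (i1 : hom X1 P) (i2 : hom X2 P)
  (h : is_orth_biproduct2 i1 i2) (x y : hom Q P) :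
  i1^* ∘ x = i1^* ∘ y -> i2^* ∘ x = i2^* ∘ y -> x = y.
Proof.
  intros e1 e2. destruct h as [_ [_ [_ [_ [hp _]]]]].
  destruct (hp Q (i1^* ∘ x) (i2^* ∘ x)) as [m [_ [_ hm]]].
  rewrite (hm x), (hm y); auto.
Qed.

Lemma bp2_epi (C : StarCat) (X1 X2 P Q : ob C) (i1 : hom X1 P) (i2 : hom X2 P)
  (h : is_orth_biproduct2 i1 i2) (x y : hom P Q) :
  x ∘ i1 = y ∘ i1 -> x ∘ i2 = y ∘ i2 -> x = y.
Proof.
  intros e1 e2. destruct h as [_ [_ [_ [_ [_ hp]]]]].
  destruct (hp Q (x ∘ i1) (x ∘ i2)) as [m [_ [_ hm]]].
  rewrite (hm x), (hm y); auto.
Qed.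

Lemma bp3_mono (C : StarCat) (X1 X2 X3 P Q : ob C) (i1 : hom X1 P) (i2 : hom X2 P)
  (i3 : hom X3 P) (h : is_orth_biproduct3 i1 i2 i3) (x y : hom Q P) :
  i1^* ∘ x = i1^* ∘ y -> i2^* ∘ x = i2^* ∘ y -> i3^* ∘ x = i3^* ∘ y -> x = y.
Proof.
  intros e1 e2 e3. destruct h as [_ [_ [_ [_ [_ [_ [_ [_ [_ [hp _]]]]]]]]]].
  destruct (hp Q (i1^* ∘ x) (i2^* ∘ x) (i3^* ∘ x)) as [m [_ [_ [_ hm]]]].
  rewrite (hm x), (hm y); auto.
Qed.

Lemma bp3_epi (C : StarCat) (X1 X2 X3 P Q : ob C) (i1 : hom X1 P) (i2 : hom X2 P)
  (i3 : hom X3 P) (h : is_orth_biproduct3 i1 i2 i3) (x y : hom P Q) :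
  x ∘ i1 = y ∘ i1 -> x ∘ i2 = y ∘ i2 -> x ∘ i3 = y ∘ i3 -> x = y.
Proof.
  intros e1 e2 e3. destruct h as [_ [_ [_ [_ [_ [_ [_ [_ [_ [_ hp]]]]]]]]]].
  destruct (hp Q (x ∘ i1) (x ∘ i2) (x ∘ i3)) as [m [_ [_ [_ hm]]]].
  rewrite (hm x), (hm y); auto.
Qed.

Lemma diag_data (C : StarCat) (HC : pre_Hilbert C) (Z : ob C) :
  exists (P : ob C) (j1 j2 : hom Z P) (d : hom Z P) (Y : ob C) (f : hom P Y),
    is_orth_biproduct2 j1 j2 /\ j1^* ∘ d = idm Z /\ j2^* ∘ d = idm Z /\ is_kernel d f.
Proof.
  destruct HC as [_ [R2 [_ R4]]].
  destruct (R2 Z Z) as [P [j1 [j2 hb]]].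
  pose proof hb as hb'. destruct hb' as [_ [_ [_ [_ [hp _]]]]].
  destruct (hp Z (idm Z) (idm Z)) as [d [e1 [e2 _]]].
  destruct (R4 Z P j1 j2 d hb e1 e2) as [Y [f hf]].
  exists P, j1, j2, d, Y, f. auto.
Qed.

Lemma jepi (C : StarCat) (HC : pre_Hilbert C) (A X Z XA : ob C) (s : hom A X)
  (sp : hom XA X) (hsp : is_isometric_orth_complement s sp) (a b : hom X Z) :
  a ∘ s = b ∘ s -> a ∘ sp = b ∘ sp -> a = b.
Proof.
  intros es esp.
  destruct (diag_data HC Z) as [P [j1 [j2 [d [Y [f [hb [d1 [d2 [fd fk]]]]]]]]]].
  pose proof hb as hb'. destruct hb' as [_ [_ [_ [_ [hp _]]]]].
  destruct (hp X a b) as [m [m1 [m2 _]]].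
  assert (pair : forall (W : ob C) (g : hom W X), a ∘ g = b ∘ g -> m ∘ g = d ∘ (a ∘ g)).
  { intros W g eg. apply (bp2_mono hb).
    - rewrite !comp_assoc, m1, d1, comp_id_l. reflexivity.
    - rewrite !comp_assoc, m2, d2, comp_id_l. auto. }
  assert (zs : is_zero_mor (f ∘ m ∘ s)).
  { rewrite <- comp_assoc, (pair _ _ es), comp_assoc. apply zcr. exact fd. }
  assert (zsp : is_zero_mor (f ∘ m ∘ sp)).
  { rewrite <- comp_assoc, (pair _ _ esp), comp_assoc. apply zcr. exact fd. }
  destruct hsp as [hspi [_ hspk]].
  assert (zz : is_zero_mor (s^* ∘ (f ∘ m)^*)).
  { rewrite <- star_comp. apply zst. exact zs. }
  destruct (hspk _ ((f ∘ m)^*) zz) as [h [eh _]].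
  assert (zh : is_zero_mor h).
  { replace h with (sp^* ∘ (f ∘ m)^*).
    - rewrite <- star_comp. apply zst. exact zsp.
    - rewrite <- eh, comp_assoc. unfold isometry in hspi. rewrite hspi. apply comp_id_l. }
  assert (zF : is_zero_mor (f ∘ m)).
  { rewrite <- (star_star (f ∘ m)). rewrite <- eh. apply zst. apply zcl. exact zh. }
  destruct (fk X m zF) as [h' [eh' _]].
  rewrite <- m1, <- m2, <- eh', !comp_assoc, d1, d2. reflexivity.
Qed.

Lemma posit (C : StarCat) (HC : pre_Hilbert C) (A K : ob C) (c : hom A K) :
  is_zero_mor (c^* ∘ c) -> is_zero_mor c.
Proof.
  intros zc. pose proof HC as [_ [_ [R3 _]]].
  destruct (R3 _ _ (c^*)) as [N [k [ki [kz kk]]]].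
  destruct (R3 _ _ (k^*)) as [N' [kp [kpi [kpz kpk]]]].
  assert (z1 : is_zero_mor (k^* ∘ c)).
  { replace (k^* ∘ c) with ((c^* ∘ k)^*) by (rewrite star_comp, star_star; reflexivity).
    apply zst. exact kz. }
  destruct (kpk _ c z1) as [g [eg _]].
  destruct (kk _ c zc) as [h [eh _]].
  assert (zg : is_zero_mor g).
  { replace g with (kp^* ∘ k ∘ h).
    - apply zcr. replace (kp^* ∘ k) with ((k^* ∘ kp)^*) by (rewrite star_comp, star_star; reflexivity).
      apply zst. exact kpz.
    - rewrite <- comp_assoc, eh, <- eg, comp_assoc. unfold isometry in kpi. rewrite kpi.
      apply comp_id_l. }
  rewrite <- eg. apply zcl. exact zg.
Qed.

Lemma same_iso (C : StarCat) (HC : pre_Hilbert C) (A T : ob C) (y z : hom A T) :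
  y^* ∘ y = idm A -> z^* ∘ z = idm A -> y^* ∘ z = idm A -> z^* ∘ y = idm A -> y = z.
Proof.
  intros yy zz yz zy.
  destruct (diag_data HC A) as [P [j1 [j2 [d [Y [f [hb [d1 [d2 [fd fk]]]]]]]]]].
  pose proof hb as hb'. destruct hb' as [_ [_ [_ [_ [_ hcp]]]]].
  destruct (hcp T y z) as [g [g1 [g2 _]]].
  assert (gg : g^* ∘ g = d ∘ d^*).
  { assert (L : forall (U V : ob C) (u : hom U P) (v : hom V P),
        u^* ∘ (g^* ∘ g ∘ v) = (g ∘ u)^* ∘ (g ∘ v))
      by (intros; rewrite star_comp, !comp_assoc; reflexivity).
    assert (R : forall (U V : ob C) (u : hom U P) (v : hom V P),
        u^* ∘ (d ∘ d^* ∘ v) = (u^* ∘ d) ∘ (v^* ∘ d)^*)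
      by (intros; rewrite star_comp, star_star, !comp_assoc; reflexivity).
    apply (bp2_epi hb); apply (bp2_mono hb); rewrite L, R, ?g1, ?g2, ?d1, ?d2, star_id, comp_id_l;
      auto. }
  assert (zc : is_zero_mor ((g ∘ f^*)^* ∘ (g ∘ f^*))).
  { rewrite star_comp, star_star. rewrite <- !comp_assoc, (comp_assoc (g^*)), gg.
    rewrite !comp_assoc. apply zcr. apply zcr. exact fd. }
  apply posit in zc; auto.
  apply zst in zc. rewrite star_comp, star_star in zc.
  destruct (fk _ _ zc) as [h [eh _]].
  assert (eg : g = h^* ∘ d^*) by (rewrite <- star_comp, eh, star_star; reflexivity).
  idtac.
  rewrite <- g1, <- g2, eg, <- !comp_assoc.
  replace (d^* ∘ j1) with ((j1^* ∘ d)^*) by (rewrite star_comp, star_star; reflexivity).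
  replace (d^* ∘ j2) with ((j2^* ∘ d)^*) by (rewrite star_comp, star_star; reflexivity).
  rewrite d1, d2. reflexivity.
Qed.

Lemma sf (C : StarCat) (X Y Z : ob C) (u : hom X Y) (v : hom Z Y) : u^* ∘ v = (v^* ∘ u)^*.
Proof. rewrite star_comp, star_star. reflexivity. Qed.

Ltac zt := solve [assumption | apply zcr; zt | apply zcl; zt].

Theorem proposition7p20 (C : StarCat) (HC : pre_Hilbert C)
    (A X Y XA YA P : ob C)
    (s : hom A X) (t : hom A Y) (hs : isometry s) (ht : isometry t)
    (sp : hom XA X) (tp : hom YA Y)
    (hsp : is_isometric_orth_complement s sp) (htp : is_isometric_orth_complement t tp)
    (i1 : hom XA P) (i2 : hom A P) (i3 : hom YA P)
    (hP : is_orth_biproduct3 i1 i2 i3)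
    (l1 : hom X P) (l2 : hom Y P)
    (hl1 : i1^* ∘ l1 = sp^* /\ i2^* ∘ l1 = s^* /\ is_zero_mor (i3^* ∘ l1))
    (hl2 : is_zero_mor (i1^* ∘ l2) /\ i2^* ∘ l2 = t^* /\ i3^* ∘ l2 = tp^*) :
  is_pushout s t l1 l2 /\ is_codilator (t ∘ s^*) l1 l2.
Proof.
  destruct hl1 as [a1 [a2 a3]]. destruct hl2 as [b1 [b2 b3]].
  unfold isometry in hs, ht.
  pose proof hsp as [spi [spz _]]. pose proof htp as [tpi [tpz _]].
  unfold isometry in spi, tpi.
  assert (zs1 : is_zero_mor (sp^* ∘ s)) by (rewrite sf; apply zst; exact spz).
  assert (zt1 : is_zero_mor (tp^* ∘ t)) by (rewrite sf; apply zst; exact tpz).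
  pose proof hP as [h11 [h22 [h33 [z21 [z31 [z12 [z32 [z13 [z23 [hprod hcop]]]]]]]]]].
  assert (l1s : l1 ∘ s = i2).
  { apply (bp3_mono hP); rewrite comp_assoc.
    - rewrite a1. apply zuniq; [exact zs1 | exact z12].
    - rewrite a2, hs, h22. reflexivity.
    - apply zuniq; [apply zcr; exact a3 | exact z32]. }
  assert (l1sp : l1 ∘ sp = i1).
  { apply (bp3_mono hP); rewrite comp_assoc.
    - rewrite a1, spi, h11. reflexivity.
    - rewrite a2. apply zuniq; [exact spz | exact z21].
    - apply zuniq; [apply zcr; exact a3 | exact z31]. }
  assert (l2t : l2 ∘ t = i2).
  { apply (bp3_mono hP); rewrite comp_assoc.
    - apply zuniq; [apply zcr; exact b1 | exact z12].
    - rewrite b2, ht, h22. reflexivity.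
    - rewrite b3. apply zuniq; [exact zt1 | exact z32]. }
  assert (l2tp : l2 ∘ tp = i3).
  { apply (bp3_mono hP); rewrite comp_assoc.
    - apply zuniq; [apply zcr; exact b1 | exact z13].
    - rewrite b2. apply zuniq; [exact tpz | exact z23].
    - rewrite b3, tpi, h33. reflexivity. }
  split.
  - split.
    + rewrite l1s, l2t. reflexivity.
    + intros Q u v euv.
      destruct (hcop Q (u ∘ sp) (u ∘ s) (v ∘ tp)) as [w [w1 [w2 [w3 _]]]].
      exists w. split; [|split].
      * apply (jepi HC hsp); rewrite <- comp_assoc; [rewrite l1s, w2 | rewrite l1sp, w1];
          reflexivity.
      * apply (jepi HC htp); rewrite <- comp_assoc; [rewrite l2t, w2, euv | rewrite l2tp, w3];
          reflexivity.
      * intros w' e1 e2. apply (bp3_epi hP).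
        -- rewrite w1, <- l1sp, comp_assoc, e1. reflexivity.
        -- rewrite w2, <- l1s, comp_assoc, e1. reflexivity.
        -- rewrite w3, <- l2tp, comp_assoc, e2. reflexivity.
  - split.
    + split; [|split]; unfold isometry.
      * apply (jepi HC hsp); rewrite <- comp_assoc, comp_id_l;
          [rewrite l1s, sf, a2, star_star | rewrite l1sp, sf, a1, star_star]; reflexivity.
      * apply (jepi HC htp); rewrite <- comp_assoc, comp_id_l;
          [rewrite l2t, sf, b2, star_star | rewrite l2tp, sf, b3, star_star]; reflexivity.
      * apply (jepi HC hsp); rewrite <- !comp_assoc.
        -- rewrite l1s, hs, comp_id_r, sf, b2, star_star. reflexivity.
        -- rewrite l1sp, sf. apply zuniq; [apply zst; exact b1 | apply zcl; exact spz].
    + intros T t1 t2 [it1 [it2 e21]]. unfold isometry in it1, it2.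
      assert (e12 : t1^* ∘ t2 = s ∘ t^*)
          by (rewrite sf, e21, star_comp, star_star; reflexivity).
      assert (key : t1 ∘ s = t2 ∘ t).
      {
        apply (same_iso HC); rewrite !star_comp, <- !comp_assoc.
        - rewrite (comp_assoc (t1^*)), it1, comp_id_l. exact hs.
        - rewrite (comp_assoc (t2^*)), it2, comp_id_l. exact ht.
        - rewrite (comp_assoc (t1^*)), e12, !comp_assoc, hs, comp_id_l. exact ht.
        - rewrite (comp_assoc (t2^*)), e21, !comp_assoc, ht, comp_id_l. exact hs. }
      destruct (hcop T (t1 ∘ sp) (t1 ∘ s) (t2 ∘ tp)) as [w [w1 [w2 [w3 _]]]].
      exists w. split; [|split; [|split]].
      * unfold isometry.
        assert (L : forall (U V : ob C) (u : hom U P) (v : hom V P),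
            u^* ∘ (w^* ∘ w ∘ v) = (w ∘ u)^* ∘ (w ∘ v))
          by (intros; rewrite star_comp, !comp_assoc; reflexivity).
        apply (bp3_epi hP); apply (bp3_mono hP); rewrite L, comp_id_l, ?w1, ?w2, ?w3;
          rewrite star_comp, <- !comp_assoc.
        all: rewrite ?(comp_assoc (t1^*)), ?(comp_assoc (t2^*)), ?it1, ?it2, ?e12, ?e21,
          ?comp_id_l, ?comp_assoc, ?spi, ?hs, ?tpi, ?h11, ?h22, ?h33, ?comp_id_l;
          try reflexivity; try (apply zuniq; zt);
          rewrite <- (comp_assoc _ (t1^*) t2), e12, ?comp_assoc, ?hs, ?comp_id_l;
          apply zuniq; zt.
      * apply (jepi HC hsp); rewrite <- comp_assoc; [rewrite l1s, w2 | rewrite l1sp, w1];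
          reflexivity.
      * apply (jepi HC htp); rewrite <- comp_assoc; [rewrite l2t, w2, key | rewrite l2tp, w3];
          reflexivity.
      * intros w' _ e1 e2. apply (bp3_epi hP).
        -- rewrite w1, <- l1sp, comp_assoc, e1. reflexivity.
        -- rewrite w2, <- l1s, comp_assoc, e1. reflexivity.
        -- rewrite w3, <- l2tp, comp_assoc, e2. reflexivity.
Qed.
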